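(* Let $T$ be a locally finite triangulation of the $\infty$-gon (so $T$ consists of finite arcs only), and let $\mathcal{T}$ be the subcategory of $\mathcal{C}_2$ whose indecomposable objects correspond to the arcs of $T$ (a maximal rigid subcategory of $\mathcal{C}_2$). Then $\mathcal{T}$ is not precovering in $\mathcal{C}_2$, and hence not functorially finite.
   Context: Let $R=\mathbb{C}[x,y]/(x^2)$, graded with $\deg x=1$, $\deg y=-1$; $M(j)_n=M_{j+n}$. $\mathcal{C}_2$ is the Frobenius category of finitely generated $\mathbb{Z}$-graded maximal Cohen–Macaulay $R$-modules with degree-preserving morphisms. Arcs $(a,b)$, $a\in\mathbb{Z}\cup\{-\infty\}$, $b\in\mathbb{Z}$, $a<b$, correspond to indecomposables via $(x,y^k)(j)\leftrightarrow(-j-k,1-j)$ ($k\ge0$, $(x,y^0)=R$) and $\mathbb{C}[y](j)=(R/(x))(j)\leftrightarrow(-\infty,-j)$; arcs of the $\infty$-gon are those with $a\in\mathbb{Z}$. Arcs $(a,b),(c,d)$ cross if $a<c<b<d$ or $c<a<d<b$; a triangulation of the $\infty$-gon is a maximal set of pairwise non-crossing arcs with integer endpoints; it is locally finite if each integer is an endpoint of only finitely many of its arcs. Subcategories are full, additive, closed under isomorphisms and summands. $\mathcal{T}$ is precovering if every object $M$ of $\mathcal{C}_2$ admits a right $\mathcal{T}$-approximation, i.e. a morphism $T\to M$ with $T\in\mathcal{T}$ through which every morphism $T'\to M$ with $T'\in\mathcal{T}$ factors. *)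

(* Defs.v *)
From mathcomp Require Import all_boot all_algebra.
From mathcomp Require Import complex.
From mathcomp Require Import reals Rstruct.

Set Implicit Arguments.
Unset Strict Implicit.
Unset Printing Implicit Defensive.
Import GRing.Theory Num.Theory.
Local Open Scope ring_scope.

Definition CC : fieldType := complex Rdefinitions.R.

(** * The ring R = C[x,y]/(x^2), deg x = 1, deg y = -1.
    R has C-basis the monomials x^e y^m (e in {0,1}, m in N),
    encoded as (e, m) : bool * nat, of degree e - m. *)
Definition mono := (bool * nat)%type.
Definition mono_deg (u : mono) : int := (u.1 : nat)%:Z - (u.2)%:Z.
(** multiplication of monomials by x and by y in R (None = 0 since x^2 = 0) *)
Definition xmul (u : mono) : option mono := if u.1 then None else Some (true, u.2).
Definition ymul (u : mono) : option mono := Some (u.1, u.2.+1).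
Definition cands (d : int) : seq mono :=
  (if d <= 0 then [:: (false, `|d|%N)] else [::]) ++
  (if d <= 1 then [:: (true, `|1 - d|%N)] else [::]).

(** * Arcs: (a, b) with a in Z u {-oo} (None = -oo), b in Z. *)
Definition arc := (option int * int)%type.
Definition valid_arc (A : arc) : Prop :=
  match A.1 with Some a => a < A.2 | None => True end.

(** The indecomposable object of C_2 attached to an arc:
    (a,b) finite  <->  (x, y^k)(j) with j = 1 - b, k = b - 1 - a;
    (-oo, b)      <->  C[y](j) = (R/(x))(j) with j = -b.
    Each such module is a monomial sub-quotient of R(j): its C-basis
    consists of the monomials u with arc_mon A u, the module structure being
    induced from R (a product landing outside the basis is 0, which is
    correct both for the ideal (x,y^k) and for the quotient R/(x)). *)
Definition arc_shift (A : arc) : int :=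
  match A.1 with Some _ => 1 - A.2 | None => - A.2 end.
Definition arc_mon (A : arc) (u : mono) : bool :=
  match A.1 with
  | Some a => u.1 || (`|(A.2 - 1 - a)%R|%N <= u.2)%N   (* ideal (x, y^k) *)
  | None => ~~ u.1                                (* R/(x) = C[y] *)
  end.
(** basis of the degree-n piece M(j)_n = M_{j+n} *)
Definition arc_basis (A : arc) (n : int) : seq mono :=
  filter (arc_mon A) (cands (arc_shift A + n)).
Definition adim (A : arc) (n : int) : nat := size (arc_basis A n).

Definition mono0 : mono := (false, 0%N).

(** Action of x (degree n -> n+1) and y (degree n+1 -> n), as matrices
    acting on row vectors of coordinates. *)
Definition xmat (A : arc) (n : int) : 'M[CC]_(adim A n, adim A (n + 1)) :=
  \matrix_(i, i') ((xmul (nth mono0 (arc_basis A n) i)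
                     == Some (nth mono0 (arc_basis A (n + 1)) i')) %:R).
Definition ymat (A : arc) (n : int) : 'M[CC]_(adim A (n + 1), adim A n) :=
  \matrix_(i, i') ((ymul (nth mono0 (arc_basis A (n + 1)) i)
                     == Some (nth mono0 (arc_basis A n) i')) %:R).

Definition is_ghom (A B : arc) (F : forall n : int, 'M[CC]_(adim A n, adim B n))
  : Prop :=
  forall n : int,
    xmat A n *m F (n + 1) = F n *m xmat B n /\
    ymat A n *m F n = F (n + 1) *m ymat B n.

(** * The category C_2 (Krull-Schmidt: objects are finite direct sums of
    indecomposables, encoded as lists of arcs; morphisms between direct sums
    are matrices of morphisms between the summands). *)
Definition arc0 : arc := (None, 0).
Definition obj := seq arc.
Definition valid_obj (s : obj) : Prop := forall A, A \in s -> valid_arc A.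

Definition mor (s t : obj) : Type :=
  forall (i : 'I_(size s)) (j : 'I_(size t)) (n : int),
    'M[CC]_(adim (nth arc0 s i) n, adim (nth arc0 t j) n).

Definition is_mor (s t : obj) (f : mor s t) : Prop :=
  forall i j, is_ghom (f i j).

Definition comp (s t u : obj) (f : mor s t) (g : mor t u) : mor s u :=
  fun i k n => \sum_(j < size t) (f i j n *m g j k n).

Definition mor_eq (s t : obj) (f g : mor s t) : Prop :=
  forall i j n, f i j n = g i j n.

(** A subcategory, given by the set of arcs of its indecomposables
    (it consists of all finite direct sums of those). *)
Definition in_subcat (P : arc -> Prop) (s : obj) : Prop :=
  forall A, A \in s -> P A.

Definition right_approx (P : arc -> Prop) (M : obj) (X : obj) (f : mor X M) :=
  in_subcat P X /\ is_mor f /\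
  forall (Y : obj) (g : mor Y M), in_subcat P Y -> is_mor g ->
    exists h : mor Y X, is_mor h /\ mor_eq (comp h f) g.

Definition left_approx (P : arc -> Prop) (M : obj) (X : obj) (f : mor M X) :=
  in_subcat P X /\ is_mor f /\
  forall (Y : obj) (g : mor M Y), in_subcat P Y -> is_mor g ->
    exists h : mor X Y, is_mor h /\ mor_eq (comp f h) g.

Definition precovering (P : arc -> Prop) : Prop :=
  forall M : obj, valid_obj M -> exists (X : obj) (f : mor X M), right_approx P f.
Definition preenveloping (P : arc -> Prop) : Prop :=
  forall M : obj, valid_obj M -> exists (X : obj) (f : mor M X), left_approx P f.
Definition functorially_finite (P : arc -> Prop) : Prop :=
  precovering P /\ preenveloping P.

Definition crosses (a b c d : int) : Prop :=
  (a < c /\ c < b /\ b < d) \/ (c < a /\ a < d /\ d < b).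

Definition triangulation (T : int -> int -> Prop) : Prop :=
  (forall a b, T a b -> a < b) /\
  (forall a b c d, T a b -> T c d -> ~ crosses a b c d) /\
  (forall a b, a < b -> ~ T a b -> exists c d, T c d /\ crosses a b c d).

Definition locally_finite (T : int -> int -> Prop) : Prop :=
  forall n : int, exists l : seq (int * int),
    forall a b, T a b -> (a = n \/ b = n) -> (a, b) \in l.

Definition arcs_of (T : int -> int -> Prop) (A : arc) : Prop :=
  match A.1 with Some a => T a A.2 | None => False end.

(* Main.v *)
Require Import Defs.
From mathcomp Require Import all_boot all_order all_algebra zify.
From Stdlib Require Import Classical.
Set Implicit Arguments.
Unset Strict Implicit.
Unset Printing Implicit Defensive.
Import Order.TTheory GRing.Theory Num.Theory.
Local Open Scope ring_scope.

Lemma basis_fin c d n : c < d -> arc_basis (Some c, d) n =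
  (if n <= c then [:: (false, `|(d - 1 - n)%R|%N)] else [::]) ++
  (if n <= d then [:: (true, `|(d - n)%R|%N)] else [::]).
Proof.
move=> cd; rewrite /arc_basis /cands /arc_shift /arc_mon /=.
case: (boolP (n <= c)) => h4; case: (boolP (n <= d)) => h5;
case: ifP => h1; case: ifP => h2 /=; try case: ifP=> h3 /=;
  try (exfalso; lia); try (do ? congr (_ :: _)); try (congr (_,_); lia); try done.
Qed.
Lemma basis_inf p n : arc_basis (None, p) n =
  (if n <= p then [:: (false, `|(p - n)%R|%N)] else [::]).
Proof.
rewrite /arc_basis /cands /arc_shift /arc_mon /=.
case: ifP => h1; case: ifP => h2 /=; try case: ifP => h3 /=;
  try (exfalso; lia); try (do ? congr (_ :: _)); try (congr (_,_); lia); try done.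
Qed.

Lemma elt_fin c d n u : c < d -> u \in arc_basis (Some c, d) n ->
  if u.1 then u = (true, `|(d - n)%R|%N) /\ n <= d
  else u = (false, `|(d - 1 - n)%R|%N) /\ n <= c.
Proof.
move=> cd; rewrite basis_fin //.
case: ifP => h1; case: ifP => h2; rewrite /= ?inE ?orbF => /=.
- by case/orP => /eqP ->.
- by move/eqP => ->.
- by move/eqP => ->.
- by [].
Qed.

Lemma elt_inf p n u : u \in arc_basis (None, p) n ->
  u = (false, `|(p - n)%R|%N) /\ n <= p.
Proof. by rewrite basis_inf; case: ifP => h1; rewrite ?inE // => /eqP ->. Qed.

Lemma uniq_basis A n : valid_arc A -> uniq (arc_basis A n).
Proof.
case: A => [[c|] d] /= v.
- by rewrite basis_fin //; case: ifP; case: ifP.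
- by rewrite basis_inf; case: ifP.
Qed.

Lemma flag_eq A n u v : valid_arc A -> u \in arc_basis A n -> v \in arc_basis A n ->
  u.1 = v.1 -> u = v.
Proof.
case: A => [[c|] d] /= vA hu hv.
- move: (elt_fin vA hu) (elt_fin vA hv).
  by case: u hu => [[] ?]; case: v hv => [[] ?] /= _ _ [-> _] [-> _].
- by move: (elt_inf hu) (elt_inf hv) => [-> _] [-> _].
Qed.

Lemma memB A n (i : 'I_(adim A n)) : nth mono0 (arc_basis A n) i \in arc_basis A n.
Proof. exact: mem_nth. Qed.

Lemma idx_inj A n (i j : 'I_(adim A n)) : valid_arc A ->
  nth mono0 (arc_basis A n) i = nth mono0 (arc_basis A n) j -> i = j.
Proof.
move=> vA e; apply: val_inj => /=.
by apply/eqP; rewrite -(nth_uniq mono0 (ltn_ord i) (ltn_ord j) (uniq_basis n vA)) e.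
Qed.

Lemma flag_inj A n (i j : 'I_(adim A n)) : valid_arc A ->
  (nth mono0 (arc_basis A n) i).1 = (nth mono0 (arc_basis A n) j).1 -> i = j.
Proof. by move=> vA e; apply: idx_inj => //; exact: (flag_eq vA (memB i) (memB j) e). Qed.

Lemma idx_ex A n u : u \in arc_basis A n ->
  exists k : 'I_(adim A n), nth mono0 (arc_basis A n) k = u.
Proof.
move=> hu; have hk : (index u (arc_basis A n) < adim A n)%N by rewrite /adim index_mem.
by exists (Ordinal hk); rewrite /= nth_index.
Qed.

Lemma inB_fin c d n u : c < d ->
  (u \in arc_basis (Some c, d) n) =
  ((n <= c) && (u == (false, `|(d - 1 - n)%R|%N))) || ((n <= d) && (u == (true, `|(d - n)%R|%N))).
Proof.
move=> cd; rewrite basis_fin // mem_cat.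
by case: ifP; case: ifP; rewrite ?inE ?orbF ?andbF ?andbT //=.
Qed.

Lemma inB_inf p n u :
  (u \in arc_basis (None, p) n) = (n <= p) && (u == (false, `|(p - n)%R|%N)).
Proof. by rewrite basis_inf; case: ifP; rewrite ?inE. Qed.

Lemma sum_one m (F : 'I_m -> CC) k0 : (forall k, k != k0 -> F k = 0) ->
  \sum_k F k = F k0.
Proof. move=> H; rewrite (bigD1 k0) //=; have -> : \sum_(i < m | i != k0) F i = 0 by apply: big1. by rewrite addr0. Qed.

Lemma xmatE A n i j : xmat A n i j =
  (xmul (nth mono0 (arc_basis A n) i) == Some (nth mono0 (arc_basis A (n+1)) j))%:R.
Proof. by rewrite mxE. Qed.
Lemma ymatE A n i j : ymat A n i j =
  (ymul (nth mono0 (arc_basis A (n+1)) i) == Some (nth mono0 (arc_basis A n) j))%:R.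
Proof. by rewrite mxE. Qed.
Lemma indl (b : bool) (x : CC) : b -> b%:R * x = x.
Proof. by move=> ->; rewrite mul1r. Qed.
Lemma indl0 (b : bool) (x : CC) : ~~ b -> b%:R * x = 0.
Proof. by move/negbTE => ->; rewrite mul0r. Qed.
Lemma indr (b : bool) (x : CC) : b -> x * b%:R = x.
Proof. by move=> ->; rewrite mulr1. Qed.
Lemma indr0 (b : bool) (x : CC) : ~~ b -> x * b%:R = 0.
Proof. by move/negbTE => ->; rewrite mulr0. Qed.

Lemma H_xx a b c d (H : forall n, 'M[CC]_(adim (Some a,b) n, adim (Some c,d) n)) :
 a < b -> c < d -> d < b -> is_ghom H ->
 forall n (i : 'I_(adim (Some a,b) n)) (k : 'I_(adim (Some c,d) n)),
 (nth mono0 (arc_basis (Some a,b) n) i).1 -> (nth mono0 (arc_basis (Some c,d) n) k).1 ->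
 H n i k = 0.
Proof.
move=> ab cd db gH.
have P: forall t : nat, forall n, n = d + 1 - t%:Z ->
 forall (i : 'I_(adim (Some a,b) n)) (k : 'I_(adim (Some c,d) n)),
 (nth mono0 (arc_basis (Some a,b) n) i).1 -> (nth mono0 (arc_basis (Some c,d) n) k).1 ->
 H n i k = 0.
  elim=> [|t IH] n En i k hi hk.
    move: (elt_fin cd (memB k)); rewrite hk => -[_]; lia.
  have [i' Ei'] : exists i' : 'I_(adim (Some a, b) (n+1)),
      nth mono0 (arc_basis (Some a,b) (n+1)) i' = (true, `|(b - (n+1))%R|%N).
    by apply: idx_ex; rewrite inB_fin // eqxx andbT; apply/orP; right; lia.
  move/matrixP: (gH n).2 => /(_ i' k); rewrite !mxE.
  rewrite (sum_one (k0:=i)); last first.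
    move=> l hl; rewrite ymatE Ei' indl0 //; apply/negP => /eqP [] el.
    by move/negP: hl; apply; apply/eqP; apply: flag_inj => //; rewrite -el hi.
  move: (elt_fin ab (memB i)); rewrite hi => -[Ei _].
  rewrite ymatE Ei' Ei indl; last by rewrite /ymul /=; apply/eqP; congr (Some (_, _)); lia.
  move=> ->; apply: big1 => l _.
  case hl: (nth mono0 (arc_basis (Some c, d) (n + 1)) l).1.
    by rewrite (IH (n+1)) ?mul0r //; [lia | rewrite Ei'].
  rewrite ymatE indr0 //; apply/negP => /eqP [] el.
  by move: hk; rewrite -el /= hl.
move=> n i k hi hk; case: (lerP n (d+1)) => hn.
  by apply: (P `|(d + 1 - n)%R|%N) => //; lia.
by move: (elt_fin cd (memB k)); rewrite hk => -[_]; lia.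
Qed.

Lemma F_x c d p (F : forall n, 'M[CC]_(adim (Some c,d) n, adim (None,p) n)) :
 c < d -> is_ghom F ->
 forall n (k : 'I_(adim (Some c,d) n)) (m : 'I_(adim (None,p) n)),
 (nth mono0 (arc_basis (Some c,d) n) k).1 -> F n k m = 0.
Proof.
move=> cd gF.
pose P n := forall (k : 'I_(adim (Some c,d) n)) (m : 'I_(adim (None,p) n)),
 (nth mono0 (arc_basis (Some c,d) n) k).1 -> F n k m = 0.
have base: forall n, n <= c -> P (n + 1).
  move=> n hn k m hk.
  have [k0 Ek0] : exists k0 : 'I_(adim (Some c, d) n),
      nth mono0 (arc_basis (Some c,d) n) k0 = (false, `|(d - 1 - n)%R|%N).
    by apply: idx_ex; rewrite inB_fin // eqxx hn.
  move/matrixP: (gF n).1 => /(_ k0 m); rewrite !mxE.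
  rewrite (sum_one (k0:=k)); last first.
    move=> l hl; rewrite xmatE Ek0 indl0 //; apply/negP => /eqP [] el.
    by move/negP: hl; apply; apply/eqP; apply: flag_inj => //; rewrite -el hk.
  move: (elt_fin cd (memB k)); rewrite hk => -[Ek _].
  rewrite xmatE Ek0 Ek indl; last by rewrite /xmul /=; apply/eqP; congr (Some (_, _)); lia.
  move=> ->; apply: big1 => l _; rewrite xmatE indr0 //.
  have [El _] := elt_inf (memB l); have [Em _] := elt_inf (memB m).
  by rewrite El Em.
have step: forall n, P n -> P (n + 1).
  move=> n IH k m hk.
  have [Em hp] := elt_inf (memB m).
  have [m0 Em0] : exists m0 : 'I_(adim (None, p) n),
      nth mono0 (arc_basis (None, p) n) m0 = (false, `|(p - n)%R|%N).
    by apply: idx_ex; rewrite inB_inf eqxx andbT; lia.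
  move/matrixP: (gF n).2 => /(_ k m0); rewrite !mxE.
  rewrite big1; last first.
    move=> l _; case hl: (nth mono0 (arc_basis (Some c, d) n) l).1.
      by rewrite IH ?mulr0.
    rewrite ymatE indl0 //; apply/negP => /eqP [] e1.
    by move: hl; rewrite -e1 /= hk.
  rewrite (sum_one (k0:=m)); last first.
    move=> l hl; exfalso; move/negP: hl; apply; apply/eqP; apply: flag_inj => //.
    by have [-> _] := elt_inf (memB l); rewrite Em.
  rewrite ymatE Em Em0 indr; last by rewrite /ymul /=; apply/eqP; congr (Some (_, _)); lia.
  by move=> <-.
have up: forall t : nat, P (c + 1 + t%:Z).
  elim=> [|t IH]; first by rewrite addr0; apply: base.
  have -> : c + 1 + t.+1%:Z = (c + 1 + t%:Z) + 1 by lia.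
  exact: step.
move=> n; case: (lerP n (c+1)) => hn.
  have [n' En] : exists n', n = n' + 1 by exists (n - 1); lia.
  subst n; apply: base; lia.
have [t Et] : exists t : nat, n = c + 1 + t%:Z by exists `|(n - (c + 1))%R|%N; lia.
subst n; exact: up.
Qed.

Lemma H_y a b c d (H : forall n, 'M[CC]_(adim (Some a,b) n, adim (Some c,d) n)) :
 a < b -> c < d -> d < b -> is_ghom H ->
 forall n (i : 'I_(adim (Some a,b) n)) (k : 'I_(adim (Some c,d) n)),
 ~~ (nth mono0 (arc_basis (Some c,d) n) k).1 -> H n i k = 0.
Proof.
move=> ab cd db gH n i k hk.
move: (elt_fin cd (memB k)); rewrite (negbTE hk) => -[Ek hn].
have [k' Ek'] : exists k' : 'I_(adim (Some c, d) (n+1)),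
    nth mono0 (arc_basis (Some c,d) (n+1)) k' = (true, `|(d - (n+1))%R|%N).
  by apply: idx_ex; rewrite inB_fin // eqxx andbT; apply/orP; right; lia.
move/matrixP: (gH n).1 => /(_ i k'); rewrite !mxE.
rewrite big1; last first.
  move=> l _; case hl: (nth mono0 (arc_basis (Some a, b) (n+1)) l).1.
    by rewrite (H_xx ab cd db gH) ?mulr0 // Ek'.
  rewrite xmatE indl0 // /xmul; case: ifP => _ //; apply/negP => /eqP [] e1.
  by move: hl; rewrite -e1.
rewrite (sum_one (k0:=k)); last first.
  move=> l hl; rewrite xmatE indr0 // /xmul.
  case: ifP => // hl1; exfalso; move/negP: hl; apply; apply/eqP; apply: flag_inj => //.
  by rewrite hl1 (negbTE hk).
rewrite xmatE Ek Ek' indr; last by rewrite /xmul /=; apply/eqP; congr (Some (_, _)); lia.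
by move=> <-.
Qed.

Definition gmat (A B : Defs.arc) (n : int) : 'M[CC]_(adim A n, adim B n) :=
  \matrix_(r, s) (~~ (nth mono0 (arc_basis A n) r).1)%:R.

Lemma g_ghom a b p : a < b -> a <= p -> is_ghom (gmat (Some a, b) (None, p)).
Proof.
move=> ab ap n; rewrite /gmat; split; apply/matrixP => i j; rewrite !mxE.
- rewrite big1; last first.
    move=> l _; rewrite [X in _ * X]mxE; case hl: (nth mono0 (arc_basis (Some a, b) (n+1)) l).1.
      by rewrite indr0.
    rewrite xmatE indl0 // /xmul; case: ifP => _ //; apply/negP => /eqP [] e1.
    by move: hl; rewrite -e1.
  rewrite big1 // => l _; rewrite xmatE indr0 //.
  have [El _] := elt_inf (memB l); have [Ej _] := elt_inf (memB j).
  by rewrite El Ej.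
- case hi: (nth mono0 (arc_basis (Some a, b) (n+1)) i).1.
    rewrite big1; last first.
      move=> l _; rewrite [X in _ * X]mxE; case hl: (nth mono0 (arc_basis (Some a, b) n) l).1.
        by rewrite indr0.
      rewrite ymatE indl0 //; apply/negP => /eqP [] e1.
      by move: hl; rewrite -e1 /= hi.
    by rewrite big1 // => l _; rewrite [X in X * _]mxE hi /= mul0r.
  move: (elt_fin ab (memB i)); rewrite hi => -[Ei hn].
  have [Ej hnp] := elt_inf (memB j).
  have [l0 El0] : exists l0 : 'I_(adim (Some a, b) n),
      nth mono0 (arc_basis (Some a,b) n) l0 = (false, `|(b - 1 - n)%R|%N).
    by apply: idx_ex; rewrite inB_fin // eqxx; apply/orP; left; lia.
  have [m0 Em0] : exists m0 : 'I_(adim (None, p) (n+1)),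
      nth mono0 (arc_basis (None, p) (n+1)) m0 = (false, `|(p - (n+1))%R|%N).
    by apply: idx_ex; rewrite inB_inf eqxx andbT; lia.
  rewrite (sum_one (k0:=l0)); last first.
    move=> l hl; rewrite ymatE indl0 // Ei; apply/negP => /eqP [] e1.
    move/negP: hl; apply; apply/eqP; apply: flag_inj => //.
    by rewrite -e1 El0.
  rewrite (sum_one (k0:=m0)); last first.
    move=> l hl; exfalso; move/negP: hl; apply; apply/eqP; apply: flag_inj => //.
    by have [-> _] := elt_inf (memB l); rewrite Em0.
  rewrite [X in _ * X]mxE [X in X * _]mxE El0 Ei mxE Ei ymatE Em0 Ej /= mul1r.
  rewrite /ymul /= mulr1.
  have e1 : (`|(b - 1 - (n + 1))%R|.+1 = `|(b - 1 - n)%R|)%N by lia.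
  have e2 : (`|(p - (n + 1))%R|.+1 = `|(p - n)%R|)%N by lia.
  by rewrite e1 e2 !eqxx.
Qed.

Lemma list_max (Q : int * int -> Prop) (f : int * int -> int) (L : seq (int * int)) :
  (forall x, Q x -> x \in L) -> (exists x, Q x) ->
  exists x, Q x /\ forall y, Q y -> f y <= f x.
Proof.
elim: L Q => [|z L IH] Q HL [x0 Hx0].
  by move: (HL _ Hx0).
pose Q' y := Q y /\ y <> z.
have HL' : forall y, Q' y -> y \in L.
  move=> y [Qy nyz]; move: (HL _ Qy); rewrite inE => /orP [/eqP //|//].
case: (classic (exists y, Q' y)) => [ex|nex].
  have [x [[Qx nxz] Mx]] := IH Q' HL' ex.
  case: (classic (Q z)) => Qz.
    case: (lerP (f z) (f x)) => hzx.
      exists x; split => // y Qy; case: (classic (y = z)) => [->//|nyz].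
      exact: Mx.
    exists z; split => // y Qy; case: (classic (y = z)) => [->//|nyz].
    by apply: le_trans (Mx y (conj Qy nyz)) _; apply: ltW.
  exists x; split => // y Qy; apply: Mx; split => // eyz; apply: Qz; by rewrite -eyz.
have Qz : Q z.
  case: (classic (x0 = z)) => [<- //| nxz]; by exfalso; apply: nex; exists x0.
exists z; split => // y Qy; case: (classic (y = z)) => [->//|nyz].
by exfalso; apply: nex; exists y.
Qed.

Lemma comb_main T p D : triangulation T -> locally_finite T -> p <= D ->
  exists a b, T a b /\ a <= p /\ D < b.
Proof.
move=> [Tlt [Tnc Tmax]] lf pD.
apply: NNPP => Hn.
have H0 : forall a b, T a b -> a <= p -> b <= D.
  move=> a b Tab ap; case: (lerP b D) => // Db; exfalso; apply: Hn; by exists a, b.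
have HL : forall k : nat, exists L : seq (int * int),
    forall a b, T a b -> p < a -> a <= p + k%:Z -> (a, b) \in L.
  elim=> [|k [L HL]]; first by exists [::] => a b _ h1 h2; exfalso; lia.
  have [l Hl] := lf (p + k.+1%:Z).
  exists (L ++ l) => a b Tab h1 h2; rewrite mem_cat.
  case: (lerP a (p + k%:Z)) => h3; first by rewrite HL.
  by rewrite Hl ?orbT //; left; lia.
have [L HLD] := HL `|(D - p)%R|%N.
pose O (x : int * int) := T x.1 x.2 /\ x.1 <= D < x.2.
have OL : forall x, O x -> x \in L.
  move=> [a b] [/= Tab h]; apply: HLD => //.
    case: (lerP a p) => // ap; move: (H0 _ _ Tab ap); lia.
  lia.
have Oex : exists x, O x.
  exists (D, D + 1); split => /=; last by lia.
  apply: NNPP => nT; have [c [d [_ cr]]] := Tmax D (D + 1) ltac:(lia) nT.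
  by move: cr; rewrite /crosses; lia.
have [[a b] [[/= Tab /andP [haD hDb]] Mx]] := list_max (fun x => x.2 - x.1) OL Oex.
have [l Hl] := lf a.
pose Q (x : int * int) := x = (a - 1, a) \/ (T x.1 x.2 /\ x.2 = a).
have QL : forall x, Q x -> x \in (a - 1, a) :: l.
  move=> [c d] [e | [Tcd ed]]; first by rewrite e mem_head.
  simpl in Tcd, ed; subst d.
  by rewrite inE Hl ?orbT //; right.
have [[u v] [Qu Mu]] := list_max (fun x => - x.1) QL (ex_intro _ (a - 1, a) (or_introl erefl)).
have ua : u < a.
  case: Qu => [[eu _]|[/= Tuv ev]]; first by lia.
  by rewrite ev in Tuv; exact: Tlt.
have uc : forall c, T c a -> u <= c.
  by move=> c Tca; move: (Mu (c, a) (or_intror (conj Tca erefl))) => /=; lia.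
case: (classic (T u b)) => Tub.
  have hh : (u, b).1 <= D < (u, b).2 by apply/andP; split => /=; lia.
  by move: (Mx (u, b) (conj Tub hh)) => /=; lia.
have [c [d [Tcd cr]]] := Tmax u b ltac:(lia) Tub.
case: cr => [[h1 [h2 h3]] | [h1 [h2 h3]]].
  case: (lerP c a) => hca.
    have hh : (c, d).1 <= D < (c, d).2 by apply/andP; split => /=; lia.
    by move: (Mx (c, d) (conj Tcd hh)) => /=; lia.
  by apply: (Tnc _ _ _ _ Tab Tcd); left; lia.
case: (ltrgtP a d) => hda.
- by apply: (Tnc _ _ _ _ Tab Tcd); right; lia.
- case: Qu => [[eu _]|[/= Tuv ev]]; first by lia.
  rewrite ev in Tuv.
  by apply: (Tnc _ _ _ _ Tuv Tcd); right; lia.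
- by rewrite -hda in Tcd; move: (uc _ Tcd); lia.
Qed.

Lemma comb T p D : triangulation T -> locally_finite T ->
  exists a b, T a b /\ a <= p /\ D < b.
Proof.
move=> tT lT; case: (lerP p D) => pD; first exact: comb_main.
have [a [b [Tab [ap pb]]]] := comb_main tT lT (lexx p).
by exists a, b; split => //; split => //; lia.
Qed.

Lemma comp_zero a b (A : Defs.arc) p
  (H : forall n, 'M[CC]_(adim (Some a,b) n, adim A n))
  (F : forall n, 'M[CC]_(adim A n, adim (None,p) n)) :
  a < b -> (match A.1 with Some c => c < A.2 | None => false end) -> A.2 < b ->
  is_ghom H -> is_ghom F -> forall n, H n *m F n = 0.
Proof.
case: A H F => [[c|] d] H F //= ab cd db gH gF n.
apply/matrixP => i j; rewrite !mxE.
have -> : \sum_k (H n i k * F n k j) = 0 :> CC.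
  apply: big1 => k _.
  case hk: (nth mono0 (arc_basis (Some c, d) n) k).1.
    by rewrite (F_x cd gF) ?hk ?mulr0.
  by rewrite (H_y ab cd db gH) ?hk ?mul0r.
by [].
Qed.

Lemma bound_seq (s : seq Defs.arc) : exists D : int, forall A, A \in s -> A.2 <= D.
Proof.
elim: s => [|B s [D HD]]; first by exists 0.
have l1 : forall x y : int, x <= Posz `|x|%N + Posz `|y|%N by move=> x y; lia.
have l2 : forall x y z : int, x <= y -> x <= Posz `|z|%N + Posz `|y|%N by move=> x y z; lia.
exists (Posz `|B.2|%N + Posz `|D|%N) => A; rewrite inE => /orP [/eqP ->|/HD h].
  exact: l1.
exact: l2.
Qed.

Theorem propositionA6 (T : int -> int -> Prop) :
  triangulation T -> locally_finite T ->
  ~ precovering (arcs_of T) /\ ~ functorially_finite (arcs_of T).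
Proof.
move=> tT lT.
suff NP : ~ precovering (arcs_of T) by split => // -[].
move=> Hpc.
pose M : obj := [:: (None, 0)].
have vM : valid_obj M by move=> A; rewrite inE => /eqP ->.
have [X [f [HX [Hf Hap]]]] := Hpc M vM.
have [D HD] := bound_seq X.
have [a [b [Tab [a0 Db]]]] := comb 0 D tT lT.
have ab : a < b := tT.1 _ _ Tab.
pose Y : obj := [:: (Some a, b)].
pose g : mor Y M := fun i j n => gmat (nth arc0 Y i) (nth arc0 M j) n.
have Hg : is_mor g.
  move=> [[|i] hi] [[|j] hj] //; exact: g_ghom.
have HY : in_subcat (arcs_of T) Y by move=> A; rewrite inE => /eqP ->.
have [h [Hh Heq]] := Hap Y g HY Hg.
have e := Heq ord0 ord0 a.
have z : Defs.comp h f ord0 ord0 a = 0.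
  rewrite /comp; apply: big1 => j _.
  have jX : nth arc0 X j \in X by apply: mem_nth.
  apply: (comp_zero ab _ _ (Hh ord0 j) (Hf j ord0)).
    move: (HX _ jX); rewrite /arcs_of; case: (nth arc0 X j) => [[c|] d] //= Tcd.
    exact: tT.1.
  move: (HD _ jX); move: (nth arc0 X j).2 => x; lia.
have [r0 Er0] : exists r0 : 'I_(adim (Some a, b) a),
    nth mono0 (arc_basis (Some a,b) a) r0 = (false, `|(b - 1 - a)%R|%N).
  by apply: idx_ex; rewrite inB_fin // eqxx lexx.
have [s0 Es0] : exists s0 : 'I_(adim (None, 0) a),
    nth mono0 (arc_basis (None,0) a) s0 = (false, `|(0 - a)%R|%N).
  by apply: idx_ex; rewrite inB_inf eqxx andbT.
move: e; rewrite z => /matrixP /(_ r0 s0).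
rewrite /g /gmat !mxE /= Er0 /=.
move=> e; have := @oner_neq0 CC; by rewrite -(mulr1n (1 : CC)) -e eqxx.
Qed.
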